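(* If $f\in\mathrm{Bool}(X)$ is rigid, then $\mathcal{E}^W(f)=\mathcal{E}^S(f)$.
   Context: A boolean function on a finite set $X$ is a map $f:\mathcal{P}(X)\to\mathbb{Z}$ with $f(\emptyset)=0$; $\mathrm{Bool}(X)$ is their set; $f_{\mid Y}$ is the restriction to $\mathcal{P}(Y)$. For disjoint $X,Y$, $(f\star_1g)(A)=f(A\cap X)+g(A\cap Y)$ (associative, commutative, unit $1\in\mathrm{Bool}(\emptyset)$). For nonempty $X$, $f$ is indecomposable if $f=f'\star_1f''$ with $f'\in\mathrm{Bool}(X\setminus Y)$, $f''\in\mathrm{Bool}(Y)$ forces $Y\in\{\emptyset,X\}$. Each $f$ determines a unique equivalence $\sim_f^i$ with $f=\prod^{\star_1}_{Y\in X/\sim_f^i}f_{\mid Y}$ and each $f_{\mid Y}$ indecomposable; its classes are the indecomposable components of $f$ and $\mathrm{ic}(f)$ is their number. For an equivalence $\sim$: $\mathrm{cl}(\sim)=|X/{\sim}|$, $\varpi_\sim$ the canonical surjection, $f/{\sim}(A)=f(\varpi_\sim^{-1}(A))$, $(f\mid\sim)(A)=\sum_{Y\in X/\sim}f(A\cap Y)$. $\mathcal{E}^W(f)=\{\sim:\mathrm{ic}(f\mid\sim)=\mathrm{cl}(\sim)\}$ and $\mathcal{E}^S(f)=\{\sim\in\mathcal{E}^W(f):\mathrm{ic}(f/{\sim})=\mathrm{ic}(f)\}$. An indecomposable $f$ is rigid if for all disjoint $A,B\subseteq X$ with $f(A\sqcup B)=f(A)+f(B)$, one has $f(A'\sqcup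 B')=f(A')+f(B')$ for all $A'\subseteq A$, $B'\subseteq B$; a general $f$ is rigid if $f_{\mid Y}$ is rigid for each indecomposable component $Y$. *)

(* Defs.v *)
From mathcomp Require Import all_boot all_order all_algebra.
Set Implicit Arguments. Unset Strict Implicit. Unset Printing Implicit Defensive.
Import GRing.Theory Num.Theory.
Local Open Scope ring_scope.

(* A boolean
   function on X is f : {set T} -> int with f set0 = 0; only its values on
   subsets of X matter.  An equivalence relation on X is represented by its
   set of classes P : {set {set T}} with [partition P X]. *)

Section BoolFun.
Variable T : finType.

(* f = f' *_1 f'' with f' in Bool(Y \ Z), f'' in Bool(Z), on the set Y.
   Necessarily f' = f_{|Y\Z} and f'' = f_{|Z}. *)
Definition splits (Y Z : {set T}) (f : {set T} -> int) : bool :=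
  [forall A : {set T}, (A \subset Y) ==>
     (f A == f (A :&: (Y :\: Z)) + f (A :&: Z))].

Definition indecomposable (Y : {set T}) (f : {set T} -> int) : bool :=
  (Y != set0) &&
  [forall Z : {set T}, ((Z \subset Y) && splits Y Z f) ==>
     ((Z == set0) || (Z == Y))].

Definition decomposes_along (X : {set T}) (P : {set {set T}})
    (f : {set T} -> int) : bool :=
  [forall A : {set T}, (A \subset X) ==>
     (f A == \sum_(Y in P) f (A :&: Y))].

Definition ic_partition_spec (X : {set T}) (f : {set T} -> int)
    (P : {set {set T}}) : bool :=
  [&& partition P X, decomposes_along X P f &
      [forall Y in P, indecomposable Y f]].

(* the (unique) partition X / ~^i_f into indecomposable components *)
Definition ic_part (X : {set T}) (f : {set T} -> int) : {set {set T}} :=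
  odflt set0 [pick P | ic_partition_spec X f P].

Definition ic (X : {set T}) (f : {set T} -> int) : nat := #|ic_part X f|.

Definition fres (P : {set {set T}}) (f : {set T} -> int) : {set T} -> int :=
  fun A => \sum_(Y in P) f (A :&: Y).

Definition fquot (f : {set T} -> int) : {set {set T}} -> int :=
  fun B => f (cover B).

End BoolFun.

Section Equiv.
Variable T : finType.

Definition E_W (X : {set T}) (f : {set T} -> int) (P : {set {set T}}) : Prop :=
  partition P X /\ ic X (fres P f) = #|P|.

Definition E_S (X : {set T}) (f : {set T} -> int) (P : {set {set T}}) : Prop :=
  E_W X f P /\ ic P (fquot f) = ic X f.

Definition rigid_indec (Y : {set T}) (f : {set T} -> int) : Prop :=
  forall A B : {set T}, A \subset Y -> B \subset Y -> [disjoint A & B] ->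
    f (A :|: B) = f A + f B ->
    forall A' B' : {set T}, A' \subset A -> B' \subset B ->
      f (A' :|: B') = f A' + f B'.

Definition rigid (X : {set T}) (f : {set T} -> int) : Prop :=
  forall Y, Y \in ic_part X f -> rigid_indec Y f.

End Equiv.

(* Main.v *)
Require Import Defs.
From mathcomp Require Import all_boot all_order all_algebra zify.
Set Implicit Arguments. Unset Strict Implicit. Unset Printing Implicit Defensive.
Import GRing.Theory Num.Theory.

Ltac bcase := repeat match goal with |- context[?x \in ?A] => case: (x \in A) end.

Section Gen.
Variable T : finType.
Variable g : {set T} -> int.
Hypothesis g0 : g set0 = 0%R.

Lemma notin_part (Q : {set {set T}}) (D B : {set T}) :
  partition Q D -> B != set0 -> [disjoint B & D] -> B \notin Q.
Proof.
move=> pQ Bn0 dBD; apply/negP => BQ.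
have sBD := partitionS pQ BQ.
move: dBD; rewrite -setI_eq0 (setIidPl sBD) => /eqP E.
by rewrite E eqxx in Bn0.
Qed.

Lemma split_of_decomp (X : {set T}) (Q : {set {set T}}) (Z W : {set T}) :
  partition Q X -> decomposes_along X Q g -> Z \subset X -> W \in Q ->
  splits Z (Z :&: W) g.
Proof.
move=> pQ dQ sZX WQ; apply/forallP => A; apply/implyP => sAZ.
have sAX := subset_trans sAZ sZX.
have dec (B : {set T}) : B \subset X -> g B = (\sum_(W' in Q) g (B :&: W'))%R.
  by move=> sBX; move/forallP: dQ => /(_ B) /implyP /(_ sBX) /eqP.
have tQ := partition_trivIset pQ.
rewrite (dec A sAX) (dec (A :&: (Z :\: Z :&: W))); last first.
  by apply: subset_trans sAX; apply: subsetIl.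
rewrite (dec (A :&: (Z :&: W))); last by apply: subset_trans sAX; apply: subsetIl.
rewrite !(bigD1 W WQ) /=.
have E1 : (\sum_(W' in Q | W' != W) g (A :&: W') =
  \sum_(W' in Q | W' != W) g (A :&: (Z :\: Z :&: W) :&: W'))%R.
  apply: eq_bigr => W' /andP[W'Q nW]; congr g; apply/setP => x.
  have dW := trivIsetP tQ _ _ W'Q WQ nW.
  rewrite !inE; case xW': (x \in W'); rewrite ?andbF ?andbT //.
  rewrite (disjointFr dW xW') /=.
  by case xA: (x \in A) => //=; rewrite (subsetP sAZ x xA).
have E2 : (\sum_(W' in Q | W' != W) g (A :&: (Z :&: W) :&: W') = 0)%R.
  apply: big1 => W' /andP[W'Q nW].
  have dW := trivIsetP tQ _ _ W'Q WQ nW.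
  rewrite -g0; congr g; apply/setP => x; rewrite !inE.
  case xW': (x \in W'); rewrite ?andbF //.
  by rewrite (disjointFr dW xW') !andbF.
have E3 : A :&: (Z :\: Z :&: W) :&: W = set0.
  by apply/setP => x; rewrite !inE; case: (x \in A); case: (x \in Z); case: (x \in W).
have E4 : A :&: (Z :&: W) :&: W = A :&: W.
  apply/setP => x; rewrite !inE; case xA: (x \in A) => //=.
  by rewrite (subsetP sAZ x xA) /= andbb.
rewrite E2 E3 E4 g0 -E1 add0r addr0 addrC.
  done.
Qed.

Lemma indec_sub_pblock (X : {set T}) (Q : {set {set T}}) (Y : {set T}) (x : T) :
  partition Q X -> decomposes_along X Q g -> Y \subset X ->
  indecomposable Y g -> x \in Y -> Y \subset pblock Q x.
Proof.
move=> pQ dQ sYX /andP[_ /forallP iY] xY.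
have xX : x \in cover Q by rewrite (cover_partition pQ) (subsetP sYX).
have WQ := pblock_mem xX.
have := iY (Y :&: pblock Q x); rewrite subsetIl (split_of_decomp pQ dQ sYX WQ) /=.
case/orP => /eqP E.
  by move/setP: E => /(_ x); rewrite !inE xY mem_pblock xX.
by apply/setIidPl.
Qed.

Lemma decomp_sub (X : {set T}) (P Q : {set {set T}}) :
  ic_partition_spec X g P -> ic_partition_spec X g Q -> P \subset Q.
Proof.
move=> /and3P[pP dP /forallP iP] /and3P[pQ dQ /forallP iQ].
apply/subsetP => Y YP.
have /set0Pn[x xY] := partition_neq0 pP YP.
have sYX := partitionS pP YP.
have xX : x \in cover Q by rewrite (cover_partition pQ) (subsetP sYX).
have ZQ := pblock_mem xX.
have s1 := indec_sub_pblock pQ dQ sYX (implyP (iP Y) YP) xY.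
have xZ : x \in pblock Q x by rewrite mem_pblock.
have s2 := indec_sub_pblock pP dP (partitionS pQ ZQ) (implyP (iQ _) ZQ) xZ.
rewrite (def_pblock (partition_trivIset pP) YP xY) in s2.
suff -> : Y = pblock Q x by [].
by apply/eqP; rewrite eqEsubset s1 s2.
Qed.

Lemma decomp_unique (X : {set T}) (P Q : {set {set T}}) :
  ic_partition_spec X g P -> ic_partition_spec X g Q -> P = Q.
Proof.
by move=> sP sQ; apply/eqP; rewrite eqEsubset !(decomp_sub sP sQ, decomp_sub sQ sP).
Qed.

Lemma indec_ext (Y : {set T}) (h : {set T} -> int) :
  (forall A : {set T}, A \subset Y -> g A = h A) -> indecomposable Y g = indecomposable Y h.
Proof.
move=> E; rewrite /indecomposable /splits; congr andb.
apply: eq_forallb => Z; congr (_ ==> _); congr andb.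
apply: eq_forallb => A; case sAY: (A \subset Y) => //=.
rewrite !E //; apply: subset_trans sAY; apply: subsetIl.
Qed.


Lemma decomp_exists (X : {set T}) : exists P, ic_partition_spec X g P.
Proof.
pose S := [set P : {set {set T}} | partition P X && decomposes_along X P g].
pose P0 : {set {set T}} := if X == set0 then set0 else [set X].
have P0S : P0 \in S.
  rewrite inE /P0; case: eqP => [-> | /eqP Xn0].
    rewrite partition_set0 eqxx /=; apply/forallP => A; apply/implyP.
    by rewrite subset0 => /eqP ->; rewrite big_set0 g0.
  apply/andP; split.
    apply/and3P; split; first by rewrite cover1.
      exact: trivIset1.
    by rewrite in_set1 eq_sym.
  apply/forallP => A; apply/implyP => sAX.
  by rewrite big_set1 (setIidPl sAX).
have [P PS Pmax] := @arg_maxnP _ P0 (fun P => P \in S) (fun P => #|P|) P0S.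
move: PS; rewrite inE => /andP[pP dP].
exists P; apply/and3P; split => //.
apply/forallP => Y; apply/implyP => YP.
rewrite /indecomposable (partition_neq0 pP YP) /=.
apply/forallP => Z; apply/implyP => /andP[sZY spZ].
apply/negPn/negP; rewrite negb_or => /andP[Zn0 ZnY].
have sYX := partitionS pP YP.
have YZn0 : Y :\: Z != set0.
  rewrite setD_eq0; apply: contra ZnY => sYZ.
  by rewrite eqEsubset sZY sYZ.
have p1 := partitionD1 pP YP.
have d1 : [disjoint Y :\: Z & X :\: Y].
  rewrite -setI_eq0; apply/eqP/setP => x; rewrite !inE.
  by case: (x \in Y); case: (x \in Z); case: (x \in X).
have p2 := partitionU1 p1 YZn0 d1.
have d2 : [disjoint Z & (Y :\: Z) :|: (X :\: Y)].
  rewrite -setI_eq0; apply/eqP/setP => x; rewrite !inE.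
  have : (x \in Z) ==> (x \in Y) by apply/implyP/subsetP.
  by bcase.
have p3 := partitionU1 p2 Zn0 d2.
have EX : Z :|: ((Y :\: Z) :|: (X :\: Y)) = X.
  apply/setP => x; rewrite !inE.
  have : (x \in Z) ==> (x \in Y) by apply/implyP/subsetP.
  have : (x \in Y) ==> (x \in X) by apply/implyP/subsetP.
  by bcase.
rewrite EX in p3.
have n1 := notin_part p1 YZn0 d1.
have n2 := notin_part p2 Zn0 d2.
pose P' := Z |: ((Y :\: Z) |: (P :\ Y)).
have dP' : decomposes_along X P' g.
  apply/forallP => A; apply/implyP => sAX.
  move/forallP: dP => /(_ A) /implyP /(_ sAX) /eqP ->.
  rewrite (big_setD1 _ YP) /P' (big_setU1 _ n2) (big_setU1 _ n1) /=.
  move/forallP: spZ => /(_ (A :&: Y)) /implyP /(_ (subsetIr _ _)) /eqP ->.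
  have -> : A :&: Y :&: (Y :\: Z) = A :&: (Y :\: Z).
    apply/setP => x; rewrite !inE.
    by case: (x \in Y); case: (x \in Z); case: (x \in A).
  have -> : A :&: Y :&: Z = A :&: Z.
    apply/setP => x; rewrite !inE.
    have : (x \in Z) ==> (x \in Y) by apply/implyP/subsetP.
    by bcase.
  by rewrite addrA [(g (A :&: Z) + _)%R]addrC.
have P'S : P' \in S by rewrite inE p3 dP'.
have := Pmax P' P'S.
rewrite /P' (cardsU1 Z) n2 (cardsU1 (Y :\: Z)) n1 (cardsD1 Y P) YP.
by rewrite /= ltnn.
Qed.

Lemma ic_partP (X : {set T}) : ic_partition_spec X g (ic_part X g).
Proof.
rewrite /ic_part; case: pickP => [P -> //| none].
by have [P sP] := decomp_exists X; rewrite none in sP.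
Qed.

End Gen.

Section Main.
Variable T : finType.
Variable f : {set T} -> int.
Hypothesis f0 : f set0 = 0%R.

Lemma fres_eq (P : {set {set T}}) (Y A : {set T}) :
  trivIset P -> Y \in P -> A \subset Y -> fres P f A = f A.
Proof.
move=> tP YP sAY; rewrite /fres (bigD1 Y YP) /= big1 ?addr0.
  by rewrite (setIidPl sAY).
move=> W /andP[WP nW]; rewrite -f0; congr f.
have dW := trivIsetP tP _ _ WP YP nW.
apply/setP => x; rewrite !inE; case xA: (x \in A); rewrite //=.
by rewrite (disjointFl dW (subsetP sAY x xA)).
Qed.

Lemma fres0 (P : {set {set T}}) : fres P f set0 = 0%R.
Proof. by rewrite /fres big1 // => W _; rewrite set0I f0. Qed.

Lemma fres_decomp (X : {set T}) (P : {set {set T}}) :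
  partition P X -> decomposes_along X P (fres P f).
Proof.
move=> pP; apply/forallP => A; apply/implyP => _.
rewrite {1}/fres; apply/eqP; apply: eq_bigr => Y YP.
by rewrite (fres_eq (partition_trivIset pP) YP (subsetIr _ _)).
Qed.

Lemma fquot0 : fquot f set0 = 0%R.
Proof. by rewrite /fquot /cover big_set0 f0. Qed.

End Main.

Theorem lemma4p13 (T : finType) (X : {set T}) (f : {set T} -> int) :
  f set0 = 0%R -> rigid X f ->
  forall P : {set {set T}}, E_W X f P <-> E_S X f P.
Proof.
move=> f0 rig P; split; last by case.
move=> [pP icP].
have tP := partition_trivIset pP.
have cP := cover_partition pP.
have indP : forall Y, Y \in P -> indecomposable Y f.
  pose g := fres P f.
  have g0 : g set0 = 0%R by apply: fres0.
  have := ic_partP g0 X; rewrite -/g.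
  set Q := ic_part X g => /and3P[pQ dQ /forallP iQ].
  have cardQ : #|Q| = #|P| by [].
  have dP : decomposes_along X P g by apply: fres_decomp.
  have cQ := cover_partition pQ.
  have ZsubP : forall Z x, Z \in Q -> x \in Z -> Z \subset pblock P x.
    move=> Z x ZQ xZ.
    exact: (indec_sub_pblock g0 pP dP (partitionS pQ ZQ) (implyP (iQ Z) ZQ) xZ).
  have inX : forall Z x, Z \in Q -> x \in Z -> x \in cover P.
    by move=> Z x ZQ xZ; rewrite cP (subsetP (partitionS pQ ZQ)).
  pose phi (Z : {set T}) := if [pick x in Z] is Some x then pblock P x else set0.
  have phiP : forall Z x, Z \in Q -> x \in Z -> phi Z = pblock P x.
    move=> Z x ZQ xZ; rewrite /phi; case: pickP => [y yZ | none]; last first.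
      by have := none x; rewrite xZ.
    apply: def_pblock => //; first exact: pblock_mem (inX _ _ ZQ xZ).
    exact: (subsetP (ZsubP Z x ZQ xZ)).
  have imP : phi @: Q = P.
    apply/setP => Y; apply/imsetP/idP.
      move=> [Z ZQ ->].
      have /set0Pn[x xZ] := partition_neq0 pQ ZQ.
      by rewrite (phiP Z x ZQ xZ); apply: pblock_mem (inX _ _ ZQ xZ).
    move=> YP.
    have /set0Pn[x xY] := partition_neq0 pP YP.
    have xQ : x \in cover Q by rewrite cQ -cP; apply/bigcupP; exists Y.
    exists (pblock Q x); first exact: pblock_mem.
    rewrite (phiP _ x (pblock_mem xQ)); last by rewrite mem_pblock.
    by rewrite (def_pblock tP YP xY).
  have injphi : {in Q &, injective phi}.
    by apply/imset_injP; rewrite imP cardQ.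
  move=> Y YP.
  have /set0Pn[x xY] := partition_neq0 pP YP.
  have xQ : x \in cover Q by rewrite cQ -cP; apply/bigcupP; exists Y.
  have ZQ := pblock_mem xQ.
  have xZ : x \in pblock Q x by rewrite mem_pblock.
  have EY : Y = pblock Q x.
    apply/eqP; rewrite eqEsubset; apply/andP; split; last first.
      by rewrite -(def_pblock tP YP xY); apply: ZsubP.
    apply/subsetP => y yY.
    have yQ : y \in cover Q by rewrite cQ -cP; apply/bigcupP; exists Y.
    have Z'Q := pblock_mem yQ.
    have yZ' : y \in pblock Q y by rewrite mem_pblock.
    suff <- : pblock Q y = pblock Q x by [].
    apply: injphi => //.
    by rewrite (phiP _ _ Z'Q yZ') (phiP _ _ ZQ xZ) (def_pblock tP YP xY) (def_pblock tP YP yY).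
  have -> : indecomposable Y f = indecomposable Y g.
    symmetry; apply: indec_ext => A sAY; exact: (fres_eq f0 tP YP sAY).
  by rewrite EY; apply: (implyP (iQ _)).
split; first by [].
have := ic_partP f0 X.
set C := ic_part X f => /and3P[pC dC /forallP iC].
have tC := partition_trivIset pC.
have cC := cover_partition pC.
have YsubK : forall Y x, Y \in P -> x \in Y -> Y \subset pblock C x.
  move=> Y x YP xY.
  exact: (indec_sub_pblock f0 pC dC (partitionS pP YP) (indP Y YP) xY).
have bK : forall K Y x, K \in C -> Y \in P -> x \in Y -> x \in K -> Y \subset K.
  by move=> K Y x KC YP xY xK; rewrite -(def_pblock tC KC xK); apply: YsubK.
pose beta (K : {set T}) := [set Y in P | Y \subset K].
have cover_beta : forall (A : {set {set T}}) K, A \subset P -> K \in C ->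
    cover A :&: K = cover (A :&: beta K).
  move=> A K sAP KC; apply/setP => x; rewrite inE; apply/andP/bigcupP.
    move=> [/bigcupP[Y YA xY] xK]; exists Y => //.
    have YP := subsetP sAP Y YA.
    by rewrite !inE YA YP (bK K Y x).
  move=> [Y]; rewrite !inE => /and3P[YA YP sYK] xY; split.
    by apply/bigcupP; exists Y.
  exact: (subsetP sYK).
have inbeta : forall K x, K \in C -> x \in K -> pblock P x \in beta K.
  move=> K x KC xK.
  have xP : x \in cover P by rewrite cP (subsetP (partitionS pC KC)).
  rewrite inE pblock_mem //=.
  apply: (bK K _ x KC (pblock_mem xP)) => //; by rewrite mem_pblock.
have betan0 : forall K, K \in C -> beta K != set0.
  move=> K KC; have /set0Pn[x xK] := partition_neq0 pC KC.
  by apply/set0Pn; exists (pblock P x); apply: inbeta.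
have beta_inj : {in C &, injective beta}.
  move=> K1 K2 K1C K2C E.
  have /set0Pn[x xK] := partition_neq0 pC K1C.
  have := inbeta _ _ K1C xK; rewrite E inE => /andP[YP sYK2].
  have xP : x \in cover P by rewrite cP (subsetP (partitionS pC K1C)).
  have xK2 : x \in K2 by apply: (subsetP sYK2); rewrite mem_pblock.
  by rewrite -(def_pblock tC K1C xK) (def_pblock tC K2C xK2).
pose R := beta @: C.
have pR : partition R P.
  apply/and3P; split.
  - apply/eqP/setP => Y; apply/bigcupP/idP.
      by move=> [B /imsetP[K KC ->]]; rewrite inE => /andP[].
    move=> YP; have /set0Pn[x xY] := partition_neq0 pP YP.
    have xC : x \in cover C by rewrite cC -cP; apply/bigcupP; exists Y.
    exists (beta (pblock C x)); first by apply: imset_f; apply: pblock_mem.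
    by rewrite inE YP YsubK.
  - apply/trivIsetP => _ _ /imsetP[K1 K1C ->] /imsetP[K2 K2C ->] neq.
    rewrite -setI_eq0; apply/eqP/setP => Y; rewrite !inE.
    apply/negP => /andP[/andP[YP sY1] /andP[_ sY2]].
    have /set0Pn[x xY] := partition_neq0 pP YP.
    move: neq; rewrite -(def_pblock tC K1C (subsetP sY1 x xY)).
    by rewrite -(def_pblock tC K2C (subsetP sY2 x xY)) eqxx.
  - apply/imsetP => [[K KC E]].
    by have := betan0 K KC; rewrite -E eqxx.
have subbP : forall K, beta K \subset P.
  by move=> K; apply/subsetP => Y; rewrite inE => /andP[].
have coverbeta : forall K, K \in C -> cover (beta K) = K.
  move=> K KC; rewrite -(setIidPr (subbP K)) -cover_beta // cP.
  exact/setIidPr/(partitionS pC KC).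
have dR : decomposes_along P R (fquot f).
  apply/forallP => A; apply/implyP => sAP.
  rewrite /fquot big_imset /=; last exact: beta_inj.
  have sAX : cover A \subset X.
    rewrite -cP; apply/subsetP => x /bigcupP[Y YA xY].
    by apply/bigcupP; exists Y => //; apply: (subsetP sAP).
  move/forallP: dC => /(_ (cover A)) /implyP /(_ sAX) /eqP ->.
  apply/eqP; apply: eq_bigr => K KC; by rewrite cover_beta.
have iR : forall B, B \in R -> indecomposable B (fquot f).
  move=> _ /imsetP[K KC ->].
  rewrite /indecomposable betan0 //=.
  apply/forallP => Z; apply/implyP => /andP[sZ spZ].
  pose U1 := cover (beta K :\: Z); pose U2 := cover Z.
  have disj : [disjoint U1 & U2].
    rewrite -setI_eq0; apply/eqP/setP => x; rewrite !inE.
    apply/negP => /andP[/bigcupP[Y1 Y1D xY1] /bigcupP[Y2 Y2Z xY2]].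
    move: Y1D; rewrite !inE => /andP[nY1Z /andP[Y1P _]].
    have Y2P := subsetP (subbP K) Y2 (subsetP sZ Y2 Y2Z).
    have E : Y1 = Y2 by rewrite -(def_pblock tP Y1P xY1) (def_pblock tP Y2P xY2).
    by rewrite E Y2Z in nY1Z.
  have EK : U1 :|: U2 = K.
    rewrite -[RHS](coverbeta K KC); apply/setP => x; rewrite !inE.
    apply/orP/bigcupP.
      case=> /bigcupP[Y]; first by rewrite inE => /andP[_ ?] ?; exists Y.
      by move=> YZ xY; exists Y => //; apply: (subsetP sZ).
    move=> [Y YB xY]; case YZ: (Y \in Z).
      by right; apply/bigcupP; exists Y.
    by left; apply/bigcupP; exists Y => //; rewrite inE YZ.
  have sp := spZ; move/forallP: sp => /(_ (beta K)) /implyP /(_ (subxx _)) /eqP.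
  rewrite /fquot (coverbeta K KC) (setIidPr (subsetDl _ _)) (setIidPr sZ) -/U1 -/U2.
  move=> eqK.
  have sU1 : U1 \subset K by rewrite -EK subsetUl.
  have sU2 : U2 \subset K by rewrite -EK subsetUr.
  have H := rig K KC U1 U2 sU1 sU2 disj (etrans (congr1 f EK) eqK).
  have spK : splits K U2 f.
    apply/forallP => A; apply/implyP => sAK; apply/eqP.
    rewrite -H; last exact: subsetIr.
      congr f; apply/setP => x; rewrite !inE.
      have : (x \in A) ==> (x \in K) by apply/implyP/subsetP.
      by bcase.
    apply/subsetP => x; rewrite !inE => /and3P[_ nU2 xK].
    move: xK; rewrite -EK inE => /orP[] //; by rewrite (negbTE nU2).
  move/implyP: (iC K) => /(_ KC) /andP[_ /forallP /(_ U2)].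
  rewrite sU2 spK /= => /orP[/eqP U20 | /eqP U2K].
    apply/orP; left; apply/eqP/setP => Y; rewrite inE.
    apply/negP => YZ.
    have YP := subsetP (subbP K) Y (subsetP sZ Y YZ).
    have /set0Pn[x xY] := partition_neq0 pP YP.
    have : x \in U2 by apply/bigcupP; exists Y.
    by rewrite U20 inE.
  apply/orP; right; rewrite eqEsubset sZ /=.
  apply/subsetP => Y YB; apply/negPn/negP => nYZ.
  have YP := subsetP (subbP K) Y YB.
  have /set0Pn[x xY] := partition_neq0 pP YP.
  have x1 : x \in U1 by apply/bigcupP; exists Y => //; rewrite inE nYZ.
  have x2 : x \in U2.
    rewrite U2K -(coverbeta K KC); by apply/bigcupP; exists Y.
  by rewrite (disjointFr disj x1) in x2.
have sR : ic_partition_spec P (fquot f) R.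
  apply/and3P; split => //; apply/forallP => B; apply/implyP; exact: iR.
rewrite /ic (decomp_unique (fquot0 f0) (ic_partP (fquot0 f0) P) sR).
by rewrite card_in_imset.
Qed.
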